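(* If $\mathcal{T}$ is a single-elimination tournament with at least $2$ players and $\sigma$ is a scoring system with distinct subset sums, then \[\dim(\mathcal{T},\sigma)=\max_{x\in M(\mathcal{T})}\Big(|P(x)|-\max_{u\in N^-(x)}|P(u)|\Big).\]
   Context: A single-elimination tournament is a finite directed graph $\mathcal{T}$ such that: (a) $\mathcal{T}$ has exactly one sink (vertex with no out-neighbours); (b) every non-sink vertex has exactly one out-neighbour; (c) $\mathcal{T}$ has no directed cycles; (d) $|N^-(v)|\ne 1$ for every vertex $v$, where $N^-(v)$ denotes the set of in-neighbours of $v$. The players $P(\mathcal{T})$ are the sources and the matches are $M(\mathcal{T})=V(\mathcal{T})\setminus P(\mathcal{T})$. For a vertex $u$, $P(u)$ is the set of players $a$ for which there is a directed walk from $a$ to $u$ (length $0$ allowed). A bracket is a function $B:V(\mathcal{T})\to P(\mathcal{T})$ with $B(a)=a$ for every player $a$ and $B(x)\in\{B(u):u\in N^-(x)\}$ for every match $x$. A scoring system is any function $\sigma:M(\mathcal{T})\to\mathbb{R}_{>0}$; it has distinct subset sums if for any two sets of matches $M,M'\subseteq M(\mathcal{T})$, $\sum_{x\in M}\sigma(x)=\sum_{x\in M'}\sigma(x)$ implies $M=M'$. For brackets $B,B'$ let $\mathrm{score}_\sigma(B,B')=\sum_{x\in M(\mathcal{T}):\,B(x)=B'(x)}\sigma(x)$. A set of brackets $\mathcal{B}$ is $\sigma$-resolving if for every pair of distinct brackets $B\ne B'$ there is $B_i\in\mathcal{B}$ with $\mathrm{score}_\sigma(B_i,B)\ne\mathrm{score}_\sigma(B_i,B')$.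 $\dim(\mathcal{T},\sigma)$ denotes the minimum size of a $\sigma$-resolving set. *)

(* Defs.v *)
From HB Require Import structures.
From mathcomp Require Import all_boot all_order all_algebra.
From mathcomp Require Import reals.
Set Implicit Arguments. Unset Strict Implicit. Unset Printing Implicit Defensive.
Import Order.TTheory GRing.Theory Num.Theory.

Section SET.
Variables (T : finType) (e : rel T).

Definition out_nbrs (v : T) : {set T} := [set w | e v w].
Definition in_nbrs (v : T) : {set T} := [set u | e u v].

Definition is_sink (v : T) : bool := out_nbrs v == set0.

Definition single_elim_tournament : Prop :=
  [/\ #|[set v | is_sink v]| = 1,
      (forall v, ~~ is_sink v -> #|out_nbrs v| = 1),
      (forall u v, e u v -> ~~ connect e v u)
    & (forall v, #|in_nbrs v| != 1)].

Definition players : {set T} := [set v | in_nbrs v == set0].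
Definition matches : {set T} := ~: players.

Definition Pset (u : T) : {set T} := [set a in players | connect e a u].

Definition is_bracket (B : {ffun T -> T}) : bool :=
  [forall a in players, B a == a] &&
  [forall x in matches, [exists u in in_nbrs x, B x == B u]].

Variable R : realType.
Local Open Scope ring_scope.
Variable sigma : T -> R.

Definition scoring_system : Prop := forall x, x \in matches -> 0 < sigma x.

Definition distinct_subset_sums : Prop :=
  forall M M' : {set T}, M \subset matches -> M' \subset matches ->
    \sum_(x in M) sigma x = \sum_(x in M') sigma x -> M = M'.

Definition score (B B' : {ffun T -> T}) : R :=
  \sum_(x in matches | B x == B' x) sigma x.

Local Close Scope ring_scope.
Definition resolving (S : {set {ffun T -> T}}) : bool :=
  [forall B in S, is_bracket B] &&
  [forall B, forall B', (is_bracket B && is_bracket B' && (B != B')) ==>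
     [exists Bi in S, score Bi B != score Bi B']].

(* dim(T, sigma): minimum size of a sigma-resolving set of brackets
   (the set of all brackets is resolving, so the minimum is attained;
   the default value #|{ffun T -> T}| is an upper bound anyway). *)
Definition dimT : nat :=
  \big[minn/#|{ffun T -> T}|]_(S : {set {ffun T -> T}} | resolving S) #|S|.

End SET.

(* Main.v *)
Require Import Defs.
From HB Require Import structures.
From mathcomp Require Import all_boot all_order all_algebra.
From mathcomp Require Import reals.
From mathcomp Require Import zify.
Set Implicit Arguments. Unset Strict Implicit. Unset Printing Implicit Defensive.

Lemma bigmin_le (I : finType) (Pr : pred I) (F : I -> nat) x0 i :
  Pr i -> \big[minn/x0]_(j | Pr j) F j <= F i.
Proof.
move=> Pi; move: (mem_index_enum i); elim: (index_enum I) => [//|j s IH].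
rewrite inE big_cons => /orP [/eqP <-|]; first by rewrite Pi geq_minl.
move=> /IH H; case: (Pr j) => //; exact: leq_trans (geq_minr _ _) H.
Qed.

Section Tree.
Variables (T : finType) (e : rel T).
Hypothesis out1 : forall u v w, e u v -> e u w -> v = w.
Hypothesis acyc : forall u v, e u v -> ~~ connect e v u.
Hypothesis in_ne1 : forall v, #|in_nbrs e v| != 1.

Local Notation P := (Pset e).
Local Notation anc v := #|[set z | connect e z v]|.

Lemma conn_antisym x y : connect e x y -> connect e y x -> x = y.
Proof.
move=> /connectP [p pth ->]; case: p pth => [//|s p] /= /andP [exs pth] Hc.
case/negP: (acyc exs); apply: connect_trans Hc.
by apply/connectP; exists p.
Qed.

Lemma no_loop x : ~~ e x x.
Proof. by apply/negP => exx; case/negP: (acyc exx). Qed.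

Lemma conn_step x y : connect e x y -> x != y -> exists s, e x s /\ connect e s y.
Proof.
move=> /connectP [p pth ->]; case: p pth => [|s p] /=; first by rewrite eqxx.
by case/andP => exs pth _; exists s; split=> //; apply/connectP; exists p.
Qed.

Lemma conn_last x y : connect e x y -> x != y -> exists c, connect e x c /\ e c y.
Proof.
move=> /connectP [p pth ->]; elim: p x pth => [|s p IH] x /=; first by rewrite eqxx.
case/andP => exs pth _.
have [E|ne] := eqVneq s (last s p).
  exists x; rewrite -E; split => //; exact: connect0.
have [c [Hc1 Hc2]] := IH s pth ne.
exists c; split => //; apply: connect_trans Hc1; exact: connect1.
Qed.

Lemma conn_lin a y z : connect e a y -> connect e a z ->
  connect e y z \/ connect e z y.
Proof.
move=> /connectP [p pth ->]; elim: p a pth => [|s p IH] a /=.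
  by move=> _ H; left.
case/andP => eas pth Haz.
have [<-|ne] := eqVneq a z.
  right; apply: connect_trans (connect1 eas) _; apply/connectP; by exists p.
have [s' [es' Hs']] := conn_step Haz ne.
rewrite -(out1 eas es') in Hs'.
exact: IH.
Qed.

Lemma player_in a : a \in players e -> forall v, e v a -> False.
Proof.
rewrite inE => /eqP H v eva.
have : v \in in_nbrs e a by rewrite inE.
by rewrite H inE.
Qed.

Lemma conn_player v a : a \in players e -> connect e v a -> v = a.
Proof.
move=> pa Hc; apply/eqP; apply/negPn/negP => ne.
have [c [_ eca]] := conn_last Hc ne.
exact: (player_in pa eca).
Qed.

Lemma P_player a : a \in players e -> P a = [set a].
Proof.
move=> pa; apply/setP => z; rewrite !inE.
apply/andP/eqP => [[_ H]|->]; first exact: conn_player H.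
by split; [move: pa; rewrite inE | exact: connect0].
Qed.

Lemma P_mono x y : connect e x y -> P x \subset P y.
Proof.
move=> Hxy; apply/subsetP => z; rewrite !inE => /andP [-> H] /=.
exact: connect_trans H Hxy.
Qed.

Lemma PsubE x a : a \in P x -> (a \in players e) /\ connect e a x.
Proof. by rewrite inE => /andP. Qed.

Lemma P_disj x u1 u2 a : e u1 x -> e u2 x -> a \in P u1 -> a \in P u2 -> u1 = u2.
Proof.
move=> e1 e2 /PsubE [_ H1] /PsubE [_ H2].
have [<-|ne] := eqVneq u1 u2 => //.
exfalso.
wlog: u1 u2 e1 e2 H1 H2 ne / connect e u1 u2.
  move=> W; case: (conn_lin H1 H2) => H; first exact: (W u1 u2).
  by apply: (W u2 u1) => //; rewrite eq_sym.
move=> H12.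
have [s [es Hs]] := conn_step H12 ne.
rewrite -(out1 e1 es) in Hs.
have := conn_antisym Hs (connect1 e2) => Ex.
by move: e2 (no_loop u2); rewrite Ex => ->.
Qed.

Lemma match_notP x : x \in matches e -> x \notin players e.
Proof. by rewrite inE. Qed.

Lemma P_split x a : x \in matches e -> a \in P x -> exists u, e u x /\ a \in P u.
Proof.
move=> mx /PsubE [pa H].
have ne : a != x by apply/eqP => E; move: mx; rewrite -E inE pa.
have [c [H1 H2]] := conn_last H ne.
by exists c; split => //; rewrite inE pa.
Qed.

Lemma anc_lt u v : e u v -> anc u < anc v.
Proof.
move=> euv; apply: proper_card; apply/properP; split.
  apply/subsetP => z; rewrite !inE => H; exact: connect_trans H (connect1 euv).
exists v; rewrite !inE ?connect0 //.
by apply/negP => H; case/negP: (acyc euv).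
Qed.

Lemma ex_player v : exists a, a \in P v.
Proof.
have Hv : connect e v v by rewrite connect0.
pose a := [arg min_(z < v | connect e z v) anc z].
case: (@arg_minnP T v (fun z => connect e z v) (fun z => anc z) Hv) => a' Ha' Hmin.
exists a'; rewrite inE; apply/andP; split; last exact: Ha'; rewrite inE.
apply/eqP/setP => z; rewrite !inE; apply/negP => eza.
have : connect e z v by apply: connect_trans (connect1 eza) Ha'.
move/Hmin; rewrite leqNgt; by rewrite anc_lt.
Qed.

Lemma match_two x : x \in matches e -> exists u1 u2, [/\ u1 != u2, e u1 x & e u2 x].
Proof.
move=> mx.
have : 1 < #|in_nbrs e x|.
  have : in_nbrs e x != set0 by move: mx; rewrite !inE.
  rewrite -card_gt0; move: (in_ne1 x); case: #|_| => [|[|]] //.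
case/card_gt1P => u1 [u2 [H1 H2 ne]]; exists u1, u2; split => //.
  by move: H1; rewrite inE.
by move: H2; rewrite inE.
Qed.

Lemma P_strict x y : connect e x y -> x != y -> #|P x| < #|P y|.
Proof.
move=> Hxy ne.
have [c [Hxc ecy]] := conn_last Hxy ne.
have my : y \in matches e.
  rewrite !inE; apply/set0Pn; exists c; by rewrite inE.
have [u1 [u2 [ne12 e1 e2]]] := match_two my.
have [c' [nec' ec']] : exists c', c' != c /\ e c' y.
  have [E|] := eqVneq u1 c; last by exists u1.
  by exists u2; split => //; rewrite -E eq_sym.
have [a Ha] := ex_player c'.
apply: (leq_ltn_trans (subset_leq_card (P_mono Hxc))).
apply: proper_card; apply/properP; split; first exact: P_mono (connect1 ecy).
exists a; first exact: (subsetP (P_mono (connect1 ec'))).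
by apply/negP => Hc; move: nec'; rewrite (P_disj ec' ecy Ha Hc) eqxx.
Qed.


Definition hv x := if [pick u in in_nbrs e x] is Some u0
  then [arg max_(u > u0 in in_nbrs e x) #|P u|] else x.

Lemma hv_spec x : x \in matches e ->
  e (hv x) x /\ forall u, e u x -> #|P u| <= #|P (hv x)|.
Proof.
move=> mx; rewrite /hv; case: pickP => [u0 Hu0|H].
  case: (arg_maxnP (fun u => #|P u|) Hu0) => h Hh Hmax.
  have Hh' : h \in in_nbrs e x := Hh.
  split; first by move: Hh'; rewrite inE.
  move=> u eux; apply: Hmax; have H' : u \in in_nbrs e x by rewrite inE.
  exact: H'.
have [u1 [u2 [_ e1 _]]] := match_two mx.
by move: (H u1); rewrite inE e1.
Qed.

Lemma hv_player x : x \in players e -> hv x = x.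
Proof.
move=> px; rewrite /hv; case: pickP => [u0|//].
by rewrite inE => eu; case: (player_in px eu).
Qed.

Lemma bigmax_hv x : x \in matches e ->
  \max_(u in in_nbrs e x) #|P u| = #|P (hv x)|.
Proof.
move=> mx; have [eh Hm] := hv_spec mx.
apply/eqP; rewrite eqn_leq; apply/andP; split.
  by apply/bigmax_leqP => u; rewrite inE; apply: Hm.
by apply: leq_bigmax_cond; rewrite inE.
Qed.

Definition Q x := P x :\: P (hv x).

Lemma Q_player x : x \in players e -> Q x = set0.
Proof. by move=> px; rewrite /Q hv_player // setDv. Qed.

Lemma QsubP x : Q x \subset P x.
Proof. exact: subsetDl. Qed.

Lemma Q_match x a : a \in Q x -> x \in matches e.
Proof.
move=> H; rewrite inE; apply/negP => px.
by move: H; rewrite Q_player // inE.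
Qed.

Lemma cardQ x : x \in matches e -> #|Q x| = #|P x| - #|P (hv x)|.
Proof.
move=> mx; have [eh _] := hv_spec mx.
rewrite /Q cardsD (setIidPr _) //; apply: P_mono; exact: connect1.
Qed.

Definition hastop a := [exists y, a \in Q y].
Definition top a := if [pick y | a \in Q y] is Some y0
  then [arg max_(y > y0 | a \in Q y) #|P y|] else a.
Definition lab a := index a (enum (Q (top a))).

Lemma top_spec a y : a \in Q y ->
  a \in Q (top a) /\ forall z, a \in Q z -> #|P z| <= #|P (top a)|.
Proof.
move=> Hy; rewrite /top; case: pickP => [y0 Hy0|H]; last by move: (H y); rewrite Hy.
case: (@arg_maxnP T y0 (fun y => a \in Q y) (fun z => #|P z|) Hy0) => t Ht Hmax.
by split => // z Hz; apply: Hmax.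
Qed.

Lemma Q_same x y a b : a \in P x -> b \in P x -> connect e x y -> x != y ->
  a \in Q y -> b \in Q y.
Proof.
move=> ax bx Hxy ne aQ.
have [c [Hxc ecy]] := conn_last Hxy ne.
have my := Q_match aQ.
have [eh _] := hv_spec my.
move: aQ; rewrite /Q !in_setD => /andP [anh ay].
have bc : b \in P c by apply: (subsetP (P_mono Hxc)).
have ac : a \in P c by apply: (subsetP (P_mono Hxc)).
rewrite (subsetP (P_mono (connect1 ecy)) b bc) andbT.
apply/negP => bh.
have E := P_disj ecy eh bc bh.
by move: anh; rewrite -E ac.
Qed.

Definition mkkey (w : T -> nat) v := w v * #|T| + enum_rank v.

Lemma mkkey_inj w : injective (mkkey w).
Proof.
move=> u v H.
have : (mkkey w u) %% #|T| = (mkkey w v) %% #|T| by rewrite H.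
rewrite /mkkey !modnMDl !modn_small; try exact: ltn_ord.
by move/val_inj/enum_rank_inj.
Qed.

Lemma mkkey_lt w u v : w u < w v -> mkkey w u < mkkey w v.
Proof.
move=> H; rewrite /mkkey.
have r1 := ltn_ord (enum_rank u).
apply: (@leq_trans ((w u).+1 * #|T|)).
  by rewrite mulSn addnC ltn_add2r.
apply: leq_trans (leq_addr _ _); exact: leq_mul.
Qed.

Definition win (f : T -> nat) x :=
  odflt x [pick a in P x | [forall b in P x, f b <= f a]].

Lemma win_spec f x : win f x \in P x /\ forall b, b \in P x -> f b <= f (win f x).
Proof.
rewrite /win; case: pickP => [a /andP [Ha /forall_inP H]|H] /=; first by split.
have [a0 Ha0] := ex_player x.
case: (@arg_maxnP T a0 (fun a => a \in P x) f Ha0) => a Ha Hmax.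
have := H a; rewrite /= Ha /= => /negP; case; apply/forall_inP => b bx.
exact: Hmax.
Qed.

Lemma win_uniq f x a : injective f -> a \in P x ->
  (forall b, b \in P x -> f b <= f a) -> win f x = a.
Proof.
move=> finj ax Ha; have [wx Hw] := win_spec f x.
apply: finj; apply/eqP; rewrite eqn_leq Ha //=; exact: Hw.
Qed.

Lemma win_w w x a : a \in P x -> (forall b, b \in P x -> b != a -> w b < w a) ->
  win (mkkey w) x = a.
Proof.
move=> ax H; apply: win_uniq => //; first exact: mkkey_inj.
move=> b bx; have [->|ne] := eqVneq b a => //.
exact/ltnW/mkkey_lt/H.
Qed.

Lemma win_ext w1 w2 x : (forall b, b \in P x -> w1 b = w2 b) ->
  win (mkkey w1) x = win (mkkey w2) x.
Proof.
move=> H; have [wx Hw] := win_spec (mkkey w2) x.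
apply: win_uniq => //; first exact: mkkey_inj.
by move=> b bx; rewrite /mkkey !H //; apply: Hw.
Qed.

Lemma win_bracket w : is_bracket e [ffun x => win (mkkey w) x].
Proof.
apply/andP; split.
  apply/forall_inP => a pa; rewrite ffunE.
  have [] := win_spec (mkkey w) a; rewrite P_player // inE => /eqP -> _ //.
apply/forall_inP => x mx; rewrite ffunE.
have [wx Hw] := win_spec (mkkey w) x.
have [u [eux au]] := P_split mx wx.
apply/exists_inP; exists u; first by rewrite inE.
rewrite ffunE; apply/eqP; apply/esym/win_uniq => //; first exact: mkkey_inj.
by move=> b bu; apply: Hw; apply: (subsetP (P_mono (connect1 eux))).
Qed.


Lemma key_arg y b c : c \in Q y -> b \in P y -> b != c -> b \in Q (top b) ->
  lab b = lab c -> #|P (top b)| < #|P (top c)|.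
Proof.
move=> cQ bP nbc bQ Hlab.
have [cQt Hmax] := top_spec cQ.
set t := top c in cQt Hmax *; set tb := top b in bQ Hlab *.
have cP : c \in P y by apply: (subsetP (QsubP y)).
have cPt : c \in P t by apply: (subsetP (QsubP t)).
have bPtb : b \in P tb by apply: (subsetP (QsubP tb)).
have Hyt : connect e y t.
  have [/PsubE [_ H1]] := (conj cP cPt) ; move=> /PsubE [_ H2].
  case: (conn_lin H1 H2) => // Hty.
  have [E|ne] := eqVneq t y; first by rewrite E connect0.
  by move: (P_strict Hty ne); rewrite ltnNge Hmax.
rewrite ltnNge; apply/negP => Hle.
have [_ Hb1] := PsubE bP; have [_ Hb2] := PsubE bPtb.
have Hytb : connect e y tb.
  case: (conn_lin Hb1 Hb2) => // Htby.
  have [E|ne] := eqVneq tb y; first by rewrite E connect0.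
  have := P_strict Htby ne.
  by rewrite ltnNge (leq_trans (Hmax _ cQ) Hle).
have cQtb : c \in Q tb.
  have [E|ne] := eqVneq y tb; first by rewrite -E.
  exact: Q_same bP cP Hytb ne bQ.
have Heq : #|P tb| = #|P t| by apply/eqP; rewrite eqn_leq Hle Hmax.
have Ett : tb = t.
  have [//|ne] := eqVneq tb t.
  case: (conn_lin Hytb Hyt) => H.
    by move: (P_strict H ne); rewrite Heq ltnn.
  by move: (P_strict H); rewrite eq_sym Heq ltnn => /(_ ne).
move: Hlab; rewrite /lab -/t -/tb Ett => Hi.
move: nbc; rewrite (index_inj _ _ _ Hi) ?eqxx // mem_enum //.
by rewrite -Ett.
Qed.

Definition wt (i : nat) a := if hastop a && (lab a == i) then #|P (top a)| else 0.

Lemma claim y c : c \in Q y -> win (mkkey (wt (lab c))) y = c.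
Proof.
move=> cQ; have [cQt Hmax] := top_spec cQ.
have cP : c \in P y by apply: (subsetP (QsubP y)).
apply: win_w => // b bP nbc.
have ht : hastop c by apply/existsP; exists y.
rewrite /wt ht eqxx /=.
case: ifP => [/andP [hb /eqP Hl]|_].
  have [z zQ] := existsP hb.
  have [bQt _] := top_spec zQ.
  exact: key_arg cQ bP nbc bQt Hl.
rewrite card_gt0; apply/set0Pn; exists c; exact: (subsetP (QsubP _)).
Qed.

Lemma lab_lt c y : c \in Q y -> lab c < #|Q (top c)|.
Proof.
move=> cQ; have [cQt _] := top_spec cQ.
by rewrite /lab cardE index_mem mem_enum.
Qed.


Lemma brP B : is_bracket e B -> forall v, B v \in P v.
Proof.
move=> /andP [/forall_inP Hp /forall_inP Hm] v.
have [n Hn] : exists n, anc v < n by exists (anc v).+1.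
elim: n v Hn => [//|n IH] v Hn.
case: (boolP (v \in players e)) => pv.
  by rewrite (eqP (Hp v pv)) P_player // in_set1.
have mv : v \in matches e by rewrite inE pv.
have /exists_inP [u uin /eqP ->] := Hm v mv.
have euv : e u v by move: uin; rewrite inE.
apply: (subsetP (P_mono (connect1 euv))); apply: IH.
by rewrite -ltnS; exact: leq_trans (anc_lt euv) Hn.
Qed.

Lemma ex_c x : x \in matches e ->
  exists c, c \notin P x /\ forall v, connect e x v -> x != v -> c \in P v.
Proof.
move=> mx; case: (pickP (fun p => e x p)) => [p exp|H].
  have mp : p \in matches e.
    rewrite !inE; apply/set0Pn; exists x; by rewrite inE.
  have [u1 [u2 [ne12 e1 e2]]] := match_two mp.
  have [c' [nec' ec']] : exists c', c' != x /\ e c' p.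
    have [E|] := eqVneq u1 x; last by exists u1.
    by exists u2; split => //; rewrite -E eq_sym.
  have [c Hc] := ex_player c'.
  exists c; split.
    by apply/negP => Hcx; move: nec'; rewrite (P_disj ec' exp Hc Hcx) eqxx.
  move=> v Hxv nxv; have [s [exs Hs]] := conn_step Hxv nxv.
  rewrite -(out1 exp exs) in Hs.
  apply: (subsetP (P_mono Hs)); exact: (subsetP (P_mono (connect1 ec'))).
exists x; split.
  by rewrite inE; move: mx; rewrite inE => /negbTE ->.
move=> v Hxv nxv; have [s [exs _]] := conn_step Hxv nxv.
by move: (H s); rewrite exs.
Qed.

Lemma lower (R : realType) (sigma : T -> R) (S : {set {ffun T -> T}}) x :
  resolving e sigma S -> x \in matches e -> #|P x| - #|P (hv x)| <= #|S|.
Proof.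
move=> /andP [_ /forallP Hres] mx.
rewrite leqNgt; apply/negP => Hlt.
pose C := [set (B : {ffun T -> T}) x | B in S].
have HC : #|C| <= #|S| by apply: leq_imset_card.
pose U := P x :\: C.
have [eh Hmx] := hv_spec mx.
have claimU : forall u, e u x -> exists2 b, b \in U & b \notin P u.
  move=> u eux; case: (boolP [exists b in U, b \notin P u]) => [/exists_inP //|/exists_inPn H]; exfalso.
  have sub : U \subset P u by apply/subsetP => b bU; move: (H b bU); rewrite negbK.
  have : #|P x| <= #|C| + #|P u|.
    apply: (@leq_trans #|C :|: U|).
      apply: subset_leq_card; apply/subsetP => b bx.
      by rewrite in_setU in_setD bx andbT; case: (b \in C).
    apply: leq_trans (leq_card_setU C U) _; rewrite leq_add2l.
    exact: subset_leq_card.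
  have := Hmx u eux; move: Hlt HC; lia.
have [a aU _] := claimU _ eh.
have aP : a \in P x by move: aU; rewrite in_setD => /andP [].
have [u1 [e1 a1]] := P_split mx aP.
have [b bU nb1] := claimU _ e1.
have bP : b \in P x by move: bU; rewrite in_setD => /andP [].
have aC : a \notin C by move: aU; rewrite in_setD => /andP [].
have bC : b \notin C by move: bU; rewrite in_setD => /andP [].
have nab : a != b by apply/eqP => E; move: nb1; rewrite -E a1.
have [c [ncx Hc]] := ex_c mx.
have nca : c != a by apply/eqP => E; move: ncx; rewrite E aP.
have ncb : c != b by apply/eqP => E; move: ncx; rewrite E bP.
pose w1 v := if v == c then 3 else if v == a then 2 else if v == b then 1 else 0.
pose w2 v := if v == c then 3 else if v == b then 2 else if v == a then 1 else 0.
pose B := [ffun v => win (mkkey w1) v].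
pose B' := [ffun v => win (mkkey w2) v].
have ac0 : (a == c) = false by rewrite eq_sym (negbTE nca).
have bc0 : (b == c) = false by rewrite eq_sym (negbTE ncb).
have ab0 : (a == b) = false by rewrite (negbTE nab).
have ba0 : (b == a) = false by rewrite eq_sym (negbTE nab).
have Bx : B x = a.
  rewrite ffunE; apply: win_w => // z zx nza; rewrite /w1 (negbTE nza) ac0 eqxx.
  have -> : (z == c) = false by apply/negP => /eqP E; move: ncx; rewrite -E zx.
  by case: (z == b).
have B'x : B' x = b.
  rewrite ffunE; apply: win_w => // z zx nzb; rewrite /w2 (negbTE nzb) bc0 eqxx.
  have -> : (z == c) = false by apply/negP => /eqP E; move: ncx; rewrite -E zx.
  by case: (z == a).
have Bv : forall v, v != x -> B v = B' v.
  move=> v nvx; rewrite !ffunE.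
  have [cv|ncv] := boolP (c \in P v).
    have Hc3 : forall w, w c = 3 -> (forall z, z != c -> w z < 3) -> win (mkkey w) v = c.
      by move=> w wc Hw; apply: win_w => // z _ nz; rewrite wc; apply: Hw.
    rewrite !Hc3 //; try by rewrite /w1 /w2 eqxx.
      by move=> z nz; rewrite /w2 (negbTE nz); do 2 case: ifP => //.
    by move=> z nz; rewrite /w1 (negbTE nz); do 2 case: ifP => //.
  have wc0 : forall z, z \in P v -> (z == c) = false.
    by move=> z zv; apply/negP => /eqP E; move: ncv; rewrite -E zv.
  have [av|nav] := boolP (a \in P v); have [bv|nbv] := boolP (b \in P v).
  - exfalso; have [_ Ha1] := PsubE aP; have [_ Ha2] := PsubE av.
    case: (conn_lin Ha1 Ha2) => H.
      have nxv : x != v by rewrite eq_sym.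
      by move: (Hc v H nxv); rewrite (negbTE ncv).
    have [c1 [Hvc1 ec1]] := conn_last H nvx.
    have ac1 : a \in P c1 by apply: (subsetP (P_mono Hvc1)).
    have E := P_disj ec1 e1 ac1 a1.
    by move: nb1; rewrite -E (subsetP (P_mono Hvc1)).
  - have zb0 : forall z, z \in P v -> (z == b) = false.
      by move=> z zv; apply/negP => /eqP E; move: nbv; rewrite -E zv.
    have -> : win (mkkey w1) v = a.
      by apply: win_w => // z zv nza; rewrite /w1 (wc0 _ zv) (negbTE nza) ac0 eqxx zb0.
    apply/esym; apply: win_w => // z zv nza.
    by rewrite /w2 (wc0 _ zv) (negbTE nza) ac0 eqxx zb0 // ab0.
  - have za0 : forall z, z \in P v -> (z == a) = false.
      by move=> z zv; apply/negP => /eqP E; move: nav; rewrite -E zv.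
    have -> : win (mkkey w1) v = b.
      by apply: win_w => // z zv nzb; rewrite /w1 (wc0 _ zv) (negbTE nzb) bc0 eqxx za0 // ba0.
    apply/esym; apply: win_w => // z zv nzb.
    by rewrite /w2 (wc0 _ zv) (negbTE nzb) bc0 eqxx za0.
  - apply: win_ext => z zv; rewrite /w1 /w2 (wc0 _ zv).
    have -> : (z == a) = false by apply/negP => /eqP E; move: nav; rewrite -E zv.
    have -> : (z == b) = false by apply/negP => /eqP E; move: nbv; rewrite -E zv.
    done.
have := Hres B; move/forallP/(_ B')/implyP.
rewrite !win_bracket /=.
have -> : B != B' by apply/eqP => E; move: nab; rewrite -Bx -B'x E eqxx.
move=> /(_ isT) /exists_inP [Bi BiS].
rewrite /score; apply/negP; rewrite negbK; apply/eqP.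
apply: eq_bigl => v; case: (eqVneq v x) => [->|nvx]; last by rewrite Bv.
have : Bi x \in C by apply: imset_f.
move=> BiC; rewrite Bx B'x.
have -> : (Bi x == a) = false by apply/negP => /eqP E; move: aC; rewrite -E BiC.
have -> : (Bi x == b) = false by apply/negP => /eqP E; move: bC; rewrite -E BiC.
done.
Qed.


Lemma main_sec (R : realType) (sigma : T -> R) : distinct_subset_sums e sigma ->
  dimT e sigma =
    \max_(x in matches e) (#|P x| - \max_(u in in_nbrs e x) #|P u|).
Proof.
move=> Hdss.
set d := \max_(x in matches e) _.
have Hd : d = \max_(x in matches e) (#|P x| - #|P (hv x)|).
  by apply: eq_bigr => x mx; rewrite bigmax_hv.
have lowS : forall S, resolving e sigma S -> d <= #|S|.
  move=> S rS; rewrite Hd; apply/bigmax_leqP => x mx; exact: lower rS mx.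
pose S0 := [set [ffun v => win (mkkey (wt i)) v] | i : 'I_d].
have cardS0 : #|S0| <= d.
  by apply: leq_trans (leq_imset_card _ _) _; rewrite card_ord.
have resS0 : resolving e sigma S0.
  apply/andP; split.
    apply/forall_inP => B /imsetP [i _ ->]; exact: win_bracket.
  apply/forallP => B; apply/forallP => B'; apply/implyP => /andP [/andP [bB bB'] nBB'].
  have [y0 Hy0] : exists y, B y != B' y.
    case: (boolP [exists y, B y != B' y]) => [/existsP //|/existsPn H].
    move: nBB'; have -> : B = B' by apply/ffunP => y; apply/eqP; move: (H y); rewrite negbK.
    by rewrite eqxx.
  case: (@arg_minnP T y0 (fun y => B y != B' y) (fun z => anc z) Hy0) => y Hy Hmin.
  move: (bB) => /andP [/forall_inP Hp /forall_inP Hm].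
  move: (bB') => /andP [/forall_inP Hp' /forall_inP Hm'].
  have my : y \in matches e.
    rewrite inE; apply/negP => py.
    by move: Hy; rewrite (eqP (Hp y py)) (eqP (Hp' y py)) eqxx.
  have agree : forall u, e u y -> B u = B' u.
    move=> u euy; apply/eqP; apply/negPn/negP => H.
    by have := Hmin u H; rewrite leqNgt (anc_lt euy).
  have /exists_inP [u uin /eqP Bu] := Hm y my.
  have /exists_inP [u' uin' /eqP Bu'] := Hm' y my.
  have euy : e u y by move: uin; rewrite inE.
  have euy' : e u' y by move: uin'; rewrite inE.
  have aP : B y \in P u by rewrite Bu; exact: brP bB u.
  have bP : B' y \in P u' by rewrite Bu' -agree //; exact: brP bB u'.
  have nuu : u != u'.
    by apply/eqP => E; move: Hy; rewrite Bu Bu' -E agree // eqxx.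
  have [eh _] := hv_spec my.
  have [c [cQ Hc]] : exists c, c \in Q y /\ ((c == B y) != (c == B' y)).
    have ay : B y \in P y by apply: (subsetP (P_mono (connect1 euy))).
    have by' : B' y \in P y by apply: (subsetP (P_mono (connect1 euy'))).
    case: (boolP (B y \in P (hv y))) => ah.
      case: (boolP (B' y \in P (hv y))) => bh.
        by move: nuu; rewrite (P_disj euy eh aP ah) (P_disj euy' eh bP bh) eqxx.
      exists (B' y); split; first by rewrite /Q in_setD bh by'.
      by rewrite eqxx; move: Hy; rewrite eq_sym; case: (_ == _).
    exists (B y); split; first by rewrite /Q in_setD ah ay.
    by rewrite eqxx (negbTE Hy).
  have [cQt _] := top_spec cQ.
  have lt : lab c < d.
    apply: (leq_trans (lab_lt cQ)); rewrite cardQ; last exact: Q_match cQt.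
    by rewrite Hd; apply: leq_bigmax_cond; exact: Q_match cQt.
  apply/exists_inP; exists [ffun v => win (mkkey (wt (Ordinal lt))) v].
    by apply/imsetP; exists (Ordinal lt).
  apply/negP => /eqP Heq.
  have sub : forall BB : {ffun T -> T}, [set v in matches e | [ffun v => win (mkkey (wt (Ordinal lt))) v] v == BB v] \subset matches e.
    by move=> BB; apply/subsetP => v; rewrite inE => /andP [].
  have := Hdss _ _ (sub B) (sub B').
  have eqs : forall BB : {ffun T -> T}, score e sigma [ffun v => win (mkkey (wt (Ordinal lt))) v] BB =
     (\sum_(v in [set v in matches e | [ffun v => win (mkkey (wt (Ordinal lt))) v] v == BB v]) sigma v)%R.
    by move=> BB; apply: eq_bigl => v; rewrite inE.
  have my' := my; rewrite !inE in my'.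
  rewrite -!eqs Heq => /(_ erefl) /setP /(_ y); rewrite !inE my' /= !ffunE /= claim //.
  by move=> E; move: Hc; rewrite E eqxx.
rewrite /dimT; apply/eqP; rewrite eqn_leq; apply/andP; split.
  apply: leq_trans cardS0; by apply: bigmin_le.
elim/big_ind: _.
- exact: leq_trans (lowS _ resS0) (max_card _).
- by move=> m n Hm Hn; rewrite leq_min Hm Hn.
- by move=> S rS; exact: lowS.
Qed.

End Tree.

Theorem lemma5p7 (T : finType) (e : rel T) (R : realType) (sigma : T -> R) :
  single_elim_tournament e ->
  2 <= #|players e| ->
  scoring_system e sigma ->
  distinct_subset_sums e sigma ->
  dimT e sigma =
    \max_(x in matches e) (#|Pset e x| - \max_(u in in_nbrs e x) #|Pset e u|).
Proof.
move=> [_ Hout Hacyc Hin] _ _ Hdss.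
have out1 : forall u v w, e u v -> e u w -> v = w.
  move=> u v w euv euw.
  have ns : ~~ is_sink e u by rewrite /is_sink; apply/set0Pn; exists v; rewrite inE.
  have /cards1P [z Hz] : #|out_nbrs e u| == 1 by rewrite Hout.
  have : v \in out_nbrs e u by rewrite inE.
  have : w \in out_nbrs e u by rewrite inE.
  by rewrite Hz !in_set1 => /eqP -> /eqP ->.
exact: (main_sec out1 Hacyc Hin Hdss).
Qed.
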